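(* Let $\mathcal{K}\subset\mathbb{R}^l$ be a closed convex cone with non-empty interior, with dual cone $\mathcal{K}^*=\{y\mid y^\top x\ge 0\ \forall x\in\mathcal{K}\}$, and write $a\preceq_{\mathcal{K}} b$ for $b-a\in\mathcal{K}$. Let $G,G^i\in\mathbb{R}^{l\times n}$ and $g,g^i\in\mathbb{R}^l$ be such that the sets $\{y\in\mathbb{R}^n\mid Gy\preceq_{\mathcal{K}} g\}$ and $\{y\in\mathbb{R}^n\mid G^iy\preceq_{\mathcal{K}} g^i\}$ are non-empty, convex and compact. Let $R,R^i\in\mathbb{R}^{n\times n}$ be rotation matrices and $p,p^i\in\mathbb{R}^n$ positions, and define $$\mathbb{S}=\{z\in\mathbb{R}^n\mid \exists y\in\mathbb{R}^n:\ Gy\preceq_{\mathcal{K}} g,\ z=Ry+p\},\qquad \mathbb{S}^i=\{z\in\mathbb{R}^n\mid \exists y\in\mathbb{R}^n:\ G^iy\preceq_{\mathcal{K}} g^i,\ z=R^iy+p^i\},$$ and $\mathrm{dist}(\mathbb{S},\mathbb{S}^i)=\min_{z_1\in\mathbb{S},\,z_2\in\mathbb{S}^i}\|z_1-z_2\|_2$. Then $\mathrm{dist}(\mathbb{S},\mathbb{S}^i)>0$ if and only if there exist $\lambda,\nu\in\mathcal{K}^*$ such that $$-\lambda^\top\big(GR^\top(p-p^i)+g\big)-\nu^\top g^i>0,\qquad \|\lambda^\top G R^\top\|_2\le 1,\qquad \lambda^\top GR^\top=-\nu^\top G^iR^{i\top}.$$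
   Context: In the paper, $\mathbb{S}$ is the region occupied by the controlled agent and $\mathbb{S}^i$ the region occupied by the $i$-th obstacle at a given prediction time step, with positions $p=Cx+c$ and $p^i=Co^i$ obtained from the states; here the positions are treated as given vectors. *)

(* Defs.v *)
From HB Require Import structures.
From mathcomp Require Import all_boot all_order all_algebra.
From mathcomp Require Import all_classical all_reals all_analysis.
Set Implicit Arguments. Unset Strict Implicit. Unset Printing Implicit Defensive.
Import Order.TTheory GRing.Theory Num.Theory.
Import numFieldNormedType.Exports.
Local Open Scope classical_set_scope.
Local Open Scope ring_scope.

Section Defs.
Variable R : realType.

Definition dotv (k : nat) (u v : 'cV[R]_k) : R := (u^T *m v) 0 0.

(* Euclidean (Frobenius) 2-norm; on row/column vectors it is the usual ||.||_2 *)
Definition norm2 (a b : nat) (A : 'M[R]_(a, b)) : R :=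
  Num.sqrt (\sum_(i < a) \sum_(j < b) A i j ^+ 2).

Definition is_cone (k : nat) (K : set 'cV[R]_k) : Prop :=
  forall x, K x -> forall t : R, 0 <= t -> K (t *: x).

Definition proper_cone (k : nat) (K : set 'cV[R]_k) : Prop :=
  [/\ closed K, convex_set K, is_cone K & (K°) !=set0].

Definition dual_cone (k : nat) (K : set 'cV[R]_k) : set 'cV[R]_k :=
  [set y | forall x, K x -> 0 <= dotv y x].

Definition cone_le (k : nat) (K : set 'cV[R]_k) (a b : 'cV[R]_k) : Prop :=
  K (b - a).

Definition rotation (n : nat) (Q : 'M[R]_n) : Prop :=
  Q^T *m Q = 1%:M /\ \det Q = 1.

Definition conic_set (l n : nat) (K : set 'cV[R]_l) (G : 'M[R]_(l, n))
  (g : 'cV[R]_l) : set 'cV[R]_n := [set y | cone_le K (G *m y) g].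

Definition placed_set (l n : nat) (K : set 'cV[R]_l) (G : 'M[R]_(l, n))
  (g : 'cV[R]_l) (Q : 'M[R]_n) (p : 'cV[R]_n) : set 'cV[R]_n :=
  [set z | exists y, conic_set K G g y /\ z = Q *m y + p].

(* dist(S1,S2) = inf of ||z1 - z2||_2 over z1 in S1, z2 in S2
   (a minimum whenever S1, S2 are non-empty compact) *)
Definition set_dist (n : nat) (S1 S2 : set 'cV[R]_n) : R :=
  inf [set r | exists z1 z2, S1 z1 /\ S2 z2 /\ r = norm2 (z1 - z2)].

End Defs.

(* Main.v *)
Require Import Defs.
From HB Require Import structures.
From mathcomp Require Import all_boot all_order all_algebra.
From mathcomp Require Import all_classical all_reals all_analysis.
From mathcomp Require Import ring lra.
Set Implicit Arguments. Unset Strict Implicit. Unset Printing Implicit Defensive.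
Import Order.TTheory GRing.Theory Num.Theory.
Import numFieldNormedType.Exports.
Local Open Scope classical_set_scope.
Local Open Scope ring_scope.
Section Alg.
Variable R : realType.
Implicit Types (k : nat).

Lemma dotvE k (u v : 'cV[R]_k) : dotv u v = \sum_i u i 0 * v i 0.
Proof. by rewrite /dotv mxE; apply: eq_bigr => i _; rewrite mxE. Qed.

Lemma dotvC k (u v : 'cV[R]_k) : dotv u v = dotv v u.
Proof. by rewrite !dotvE; apply: eq_bigr => i _; rewrite mulrC. Qed.

Lemma dotvDr k (u v w : 'cV[R]_k) : dotv u (v + w) = dotv u v + dotv u w.
Proof. by rewrite !dotvE -big_split; apply: eq_bigr => i _; rewrite mxE mulrDr. Qed.

Lemma dotvDl k (u v w : 'cV[R]_k) : dotv (v + w) u = dotv v u + dotv w u.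
Proof. by rewrite dotvC dotvDr !(dotvC u). Qed.

Lemma dotvZr k a (u v : 'cV[R]_k) : dotv u (a *: v) = a * dotv u v.
Proof. by rewrite !dotvE mulr_sumr; apply: eq_bigr => i _; rewrite mxE mulrCA. Qed.

Lemma dotvZl k a (u v : 'cV[R]_k) : dotv (a *: u) v = a * dotv u v.
Proof. by rewrite dotvC dotvZr dotvC. Qed.

Lemma dotvNr k (u v : 'cV[R]_k) : dotv u (- v) = - dotv u v.
Proof. by rewrite -scaleN1r dotvZr mulN1r. Qed.

Lemma dotvNl k (u v : 'cV[R]_k) : dotv (- u) v = - dotv u v.
Proof. by rewrite dotvC dotvNr dotvC. Qed.

Lemma dotvBr k (u v w : 'cV[R]_k) : dotv u (v - w) = dotv u v - dotv u w.
Proof. by rewrite dotvDr dotvNr. Qed.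

Lemma dotvBl k (u v w : 'cV[R]_k) : dotv (v - w) u = dotv v u - dotv w u.
Proof. by rewrite dotvDl dotvNl. Qed.

Lemma dotv0r k (u : 'cV[R]_k) : dotv u 0 = 0.
Proof. by rewrite dotvE big1 // => i _; rewrite mxE mulr0. Qed.

Lemma dotv_mulmx k m (u : 'cV[R]_k) (A : 'M[R]_(k, m)) (v : 'cV[R]_m) :
  dotv u (A *m v) = dotv (A^T *m u) v.
Proof. by rewrite /dotv trmx_mul trmxK mulmxA. Qed.

Definition sq k (u : 'cV[R]_k) := dotv u u.

Lemma sqE k (u : 'cV[R]_k) : sq u = \sum_i u i 0 ^+ 2.
Proof. by rewrite /sq dotvE; apply: eq_bigr => i _; rewrite expr2. Qed.

Lemma sq_ge0 k (u : 'cV[R]_k) : 0 <= sq u.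
Proof. by rewrite sqE sumr_ge0 // => i _; rewrite sqr_ge0. Qed.

Lemma sq_eq0 k (u : 'cV[R]_k) : sq u = 0 -> u = 0.
Proof.
rewrite sqE => /eqP; rewrite psumr_eq0 => [/allP H|i _]; last by rewrite sqr_ge0.
apply/matrixP => i j; rewrite ord1 mxE; apply/eqP; rewrite -sqrf_eq0.
exact: (implyP (H i (mem_index_enum _))).
Qed.

Lemma sq_entry k (u : 'cV[R]_k) i : u i 0 ^+ 2 <= sq u.
Proof.
rewrite sqE (bigD1 i) //= lerDl sumr_ge0 // => j _; exact: sqr_ge0.
Qed.

Lemma sqDr k a (u v : 'cV[R]_k) :
  sq (u + a *: v) = sq u + 2 * a * dotv u v + a ^+ 2 * sq v.
Proof.
rewrite /sq !(dotvDl, dotvDr, dotvZl, dotvZr) (dotvC v u); ring.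
Qed.

Lemma sqZ k a (u : 'cV[R]_k) : sq (a *: u) = a ^+ 2 * sq u.
Proof. by rewrite /sq dotvZl dotvZr mulrA expr2. Qed.

Lemma sqN k (u : 'cV[R]_k) : sq (- u) = sq u.
Proof. by rewrite /sq dotvNl dotvNr opprK. Qed.

Lemma sqD_le k (u v : 'cV[R]_k) : sq (u + v) <= 2 * sq u + 2 * sq v.
Proof.
rewrite !sqE !mulr_sumr -big_split /=; apply: ler_sum => i _; rewrite mxE.
have := sqr_ge0 (u i 0 - v i 0); nra.
Qed.

Lemma dotv_le_sqrt k (w v : 'cV[R]_k) : sq w <= 1 -> dotv w v <= Num.sqrt (sq v).
Proof.
move=> hw; set s := Num.sqrt (sq v).
have s0 : 0 <= s by rewrite sqrtr_ge0.
have ss : s ^+ 2 = sq v by rewrite sqr_sqrtr // sq_ge0.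
have [sp|sp] := eqVneq s 0.
  have v0 : v = 0 by apply: sq_eq0; rewrite -ss sp expr0n.
  by rewrite v0 dotv0r sqrtr_ge0.
have sp' : 0 < s by rewrite lt_neqAle eq_sym sp s0.
have := sq_ge0 (v + (- s) *: w); rewrite sqDr -ss (dotvC v w).
have := sq_ge0 w; nra.
Qed.

End Alg.
Section IfDir.
Variable R : realType.

Lemma norm2_cV k (z : 'cV[R]_k) : norm2 z = Num.sqrt (sq z).
Proof.
by rewrite /norm2 sqE; congr Num.sqrt; apply: eq_bigr => i _; rewrite big_ord1.
Qed.

Lemma norm2_rV k (M : 'rV[R]_k) : norm2 M = Num.sqrt (sq M^T).
Proof.
by rewrite /norm2 sqE big_ord1; congr Num.sqrt; apply: eq_bigr => i _; rewrite mxE.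
Qed.

Lemma sqB_sym k (u v : 'cV[R]_k) : sq (u - v) = sq (v - u).
Proof. by rewrite -sqN opprB. Qed.

Lemma mulTK n (Q : 'M[R]_n) (v : 'cV[R]_n) : Q^T *m Q = 1%:M -> Q^T *m (Q *m v) = v.
Proof. by move=> h; rewrite mulmxA h mul1mx. Qed.

Lemma if_bound l n (K : set 'cV[R]_l) (G Gi : 'M[R]_(l, n)) (g gi : 'cV[R]_l)
  (Q Qi : 'M[R]_n) (p pi : 'cV[R]_n) (lam nu : 'cV[R]_l) z1 z2 :
  Q^T *m Q = 1%:M -> Qi^T *m Qi = 1%:M ->
  dual_cone K lam -> dual_cone K nu ->
  norm2 (lam^T *m G *m Q^T) <= 1 ->
  lam^T *m G *m Q^T = - (nu^T *m Gi *m Qi^T) ->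
  placed_set K G g Q p z1 -> placed_set K Gi gi Qi pi z2 ->
  - dotv lam (G *m Q^T *m (p - pi) + g) - dotv nu gi <= norm2 (z1 - z2).
Proof.
move=> hQ hQi dl dn hn he [y1 [hy1 ->]] [y2 [hy2 ->]].
set M := lam^T *m G *m Q^T.
set w := M^T.
have hw : w = Q *m (G^T *m lam) by rewrite /w /M !trmx_mul !trmxK mulmxA.
have hw' : - w = Qi *m (Gi^T *m nu).
  by rewrite /w /M he linearN /= opprK !trmx_mul !trmxK mulmxA.
have e1 : dotv lam (G *m Q^T *m (p - pi)) = dotv w (p - pi).
  by rewrite dotv_mulmx hw !trmx_mul trmxK mulmxA.
have e2 : dotv w (Q *m y1) = dotv lam (G *m y1).
  by rewrite dotv_mulmx hw mulTK // dotv_mulmx.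
have e3 : dotv (- w) (Qi *m y2) = dotv nu (Gi *m y2).
  by rewrite dotv_mulmx hw' mulTK // dotv_mulmx.
have h1 := dl _ hy1; have h2 := dn _ hy2.
rewrite dotvBr in h1; rewrite dotvBr in h2.
have sw : sq w <= 1.
  move: hn; rewrite norm2_rV -/M -/w => hn.
  have := sqr_sqrtr (sq_ge0 w); have := sqrtr_ge0 (sq w); nra.
have cs := dotv_le_sqrt (Qi *m y2 + pi - (Q *m y1 + p)) sw.
rewrite norm2_cV sqB_sym.
apply: le_trans cs.
rewrite dotvDr e1 !dotvBr !dotvDr e2 dotvNl in e3 *.
lra.
Qed.

End IfDir.
Section IfDir2.
Variable R : realType.

Lemma if_dir l n (K : set 'cV[R]_l) (G Gi : 'M[R]_(l, n)) (g gi : 'cV[R]_l)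
  (Q Qi : 'M[R]_n) (p pi : 'cV[R]_n) :
  Q^T *m Q = 1%:M -> Qi^T *m Qi = 1%:M ->
  conic_set K G g !=set0 -> conic_set K Gi gi !=set0 ->
  (exists lam nu : 'cV[R]_l,
     [/\ dual_cone K lam, dual_cone K nu,
         - dotv lam (G *m Q^T *m (p - pi) + g) - dotv nu gi > 0,
         norm2 (lam^T *m G *m Q^T) <= 1
       & lam^T *m G *m Q^T = - (nu^T *m Gi *m Qi^T)]) ->
  0 < set_dist (placed_set K G g Q p) (placed_set K Gi gi Qi pi).
Proof.
move=> hQ hQi [y1 hy1] [y2 hy2] [lam [nu [dl dn hc hn he]]].
apply: (lt_le_trans hc); apply: lb_le_inf.
  exists (norm2 ((Q *m y1 + p) - (Qi *m y2 + pi))).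
  by exists (Q *m y1 + p), (Qi *m y2 + pi); split; [exists y1|split; [exists y2|]].
move=> r [z1 [z2 [h1 [h2 ->]]]].
exact: (if_bound hQ hQi dl dn hn he h1 h2).
Qed.

End IfDir2.
Section Topo.
Variable R : realType.

Lemma mxnorm_entry m n (A : 'M[R]_(m, n)) i j : `|A i j| <= `|A|.
Proof.
rewrite [leRHS]/Num.Def.normr /= mx_normrE.
exact: (le_bigmax _ (fun ij => `|A ij.1 ij.2|) (i, j)).
Qed.

Lemma mxnorm_le m n (A : 'M[R]_(m, n)) c :
  0 <= c -> (forall i j, `|A i j| <= c) -> `|A| <= c.
Proof.
move=> c0 h; rewrite [leLHS]/Num.Def.normr /= mx_normrE (bigmax_le _ c0) // => -[i j] _.
Qed.

Lemma lip_continuous (U V : normedModType R) (f : U -> V) C :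
  (forall x y, `|f x - f y| <= C * `|x - y|) -> continuous f.
Proof.
move=> hf x; apply/cvgrPdist_lt => e e0.
have C0 : 0 < `|C| + 1 by rewrite ltr_wpDl.
near=> z; apply: (le_lt_trans (hf x z)).
have : `|x - z| < e / (`|C| + 1).
  by near: z; apply: cvgr_dist_lt => //; rewrite divr_gt0.
rewrite ltr_pdivlMr // => h.
apply: le_lt_trans h; rewrite mulrC; apply: ler_wpM2l; first exact: normr_ge0.
by apply: le_trans (ler_norm C) _; rewrite lerDl.
Unshelve. all: by end_near. Qed.

Lemma trmx_norm_le m n (A : 'M[R]_(m, n)) : `|A^T| <= `|A|.
Proof. by apply: mxnorm_le => // i j; rewrite mxE mxnorm_entry. Qed.

Lemma trmx_continuous m n : continuous (@trmx R m n).
Proof.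
apply: (@lip_continuous _ _ _ 1) => x y; rewrite mul1r -linearB /=.
exact: trmx_norm_le.
Qed.

Lemma mulmx_norm_le m n k (A : 'M[R]_(m, n)) (x : 'M[R]_(n, k)) :
  `|A *m x| <= n%:R * `|A| * `|x|.
Proof.
apply: mxnorm_le => [|i j]; first by rewrite !mulr_ge0.
rewrite mxE (le_trans (ler_norm_sum _ _ _)) //.
apply: le_trans (_ : \sum_(l < n) (`|A| * `|x|) <= _).
  apply: ler_sum => l _; rewrite normrM.
  by apply: ler_pM => //; exact: mxnorm_entry.
by rewrite sumr_const card_ord -[_ *+ n]mulr_natl mulrA.
Qed.

Lemma mulmx_continuous m n k (A : 'M[R]_(m, n)) :
  continuous (fun x : 'M[R]_(n, k) => A *m x).
Proof.
apply: (@lip_continuous _ _ _ (n%:R * `|A|)) => x y.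
by rewrite -mulmxBr mulmx_norm_le.
Qed.

Lemma sum_continuous (T : topologicalType) I (s : seq I) (F : I -> T -> R) :
  (forall i, continuous (F i)) -> continuous (fun x => \sum_(i <- s) F i x).
Proof.
move=> hF; elim: s => [|a s IH].
  have -> : (fun x => \sum_(i <- [::]) F i x) = (fun=> 0) .
    by apply: funext => x; rewrite big_nil.
  exact: cst_continuous.
have -> : (fun x => \sum_(i <- a :: s) F i x) =
          (fun x => F a x + \sum_(i <- s) F i x).
  by apply: funext => x; rewrite big_cons.
move=> x; apply: continuousD; [exact: hF | exact: IH].
Qed.

Lemma sq_continuous k : continuous (@sq R k).
Proof.
have -> : @sq R k = (fun v => \sum_(i <- index_enum 'I_k) (v i 0 * v i 0)).
  by apply: funext => v; rewrite /sq dotvE.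
apply: sum_continuous => i x; apply: continuousM; exact: coord_continuous.
Qed.

Lemma cV_compact k (A : set 'cV[R]_k) : bounded_set A -> closed A -> compact A.
Proof.
move=> bA cA.
set A' := [set v : 'rV[R]_k | A v^T].
have -> : A = trmx @` A'.
  apply/seteqP; split => [x Ax|_ [v Av <-] //].
  by exists x^T; rewrite /A' /= trmxK.
apply: continuous_compact.
  exact: continuous_subspaceT (@trmx_continuous _ _).
apply: bounded_closed_compact.
  move: bA => [M [Mreal HM]]; exists M; split => // r Mr v Av.
  apply: le_trans (HM r Mr _ Av); rewrite -{1}(trmxK v); exact: trmx_norm_le.
exact: (proj1 (continuous_closedP _) (@trmx_continuous _ _) _ cA).
Qed.

Lemma closed_sqle k M : closed [set v : 'cV[R]_k | sq v <= M].
Proof.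
have h := proj1 (continuous_closedP _) (@sq_continuous k) _ (@closed_le R M).
exact: h.
Qed.

Lemma sqball_compact k M : compact [set v : 'cV[R]_k | sq v <= M].
Proof.
apply: cV_compact; last exact: closed_sqle.
exists (1 + `|M|); split; first by rewrite realE ?addr_ge0 // ler_wpDr.
move=> r Mr v /= hv; apply: le_trans (ltW Mr).
apply: mxnorm_le; first by rewrite addr_ge0.
move=> i j; rewrite ord1.
have h1 := le_trans (sq_entry v i) hv.
have h2 : `|v i 0| ^+ 2 = v i 0 ^+ 2 by rewrite real_normK // num_real.
have h3 := ler_norm M. have h4 := normr_ge0 (v i 0).
nra.
Qed.

End Topo.
Lemma fst_cont (U V : topologicalType) : continuous (@fst U V).
Proof. move=> [a b]; exact: cvg_fst. Qed.
Lemma snd_cont (U V : topologicalType) : continuous (@snd U V).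
Proof. move=> [a b]; exact: cvg_snd. Qed.

Section Cone.
Variable R : realType.
Variables (l : nat) (K : set 'cV[R]_l).
Hypothesis hK : proper_cone K.

Lemma K_cone x t : K x -> 0 <= t -> K (t *: x).
Proof. by case: hK => _ _ hc _ kx t0; exact: hc. Qed.

Lemma K_half a b : K a -> K b -> K (2^-1 *: a + 2^-1 *: b).
Proof.
case: hK => _ hc _ _ ha hb.
have h0 : (0 : R) <= 2^-1 by rewrite invr_ge0.
have h1 : (2^-1 : R) <= 1 by rewrite invf_le1 // ler1n.
have := hc a b (Itv01 h0 h1).
rewrite !inE => /(_ ha hb).
rewrite /conv /=.
have -> : unstable.onem (2^-1 : R) = 2^-1 by rewrite /unstable.onem; field.
by [].
Qed.

Lemma K_add a b : K a -> K b -> K (a + b).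
Proof.
move=> ha hb; have := K_cone (K_half ha hb) (_ : 0 <= 2).
rewrite scalerDr !scalerA mulfV ?pnatr_eq0 // !scale1r; exact.
Qed.

Lemma K_0 : K 0.
Proof.
case: hK => _ _ _ [x /interior_subset kx].
by have := K_cone kx (lexx 0); rewrite scale0r.
Qed.

Lemma K_closed : closed K.
Proof. by case: hK. Qed.

End Cone.

Section Recession.
Variable R : realType.

Lemma recession l n (K : set 'cV[R]_l) (G : 'M[R]_(l, n)) g :
  proper_cone K -> conic_set K G g !=set0 -> compact (conic_set K G g) ->
  forall d, K (- (G *m d)) -> d = 0.
Proof.
move=> hK [y0 hy0] /compact_bounded [M [Mr HM]] d hd.
apply/eqP; apply/negPn/negP => d0.
have dp : 0 < `|d| by rewrite normr_gt0.
set r := `|M| + 1.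
have Mr' : M < r by rewrite /r (le_lt_trans (ler_norm M)) // ltrDl.
set t := (r + `|y0| + 1) / `|d|.
have t0 : 0 <= t by rewrite divr_ge0 // !addr_ge0.
have hin : conic_set K G g (y0 + t *: d).
  rewrite /conic_set /cone_le /=.
  have -> : g - G *m (y0 + t *: d) = (g - G *m y0) + t *: (- (G *m d)).
    by rewrite mulmxDr linearZ /= opprD addrA scalerN.
  by apply: K_add => //; exact: K_cone.
have := HM r Mr' _ hin.
have : `|t *: d| <= `|y0 + t *: d| + `|y0|.
  by rewrite -{1}(addKr y0 (t *: d)) addrC; apply: (le_trans (ler_normB _ _)); rewrite addrC.
rewrite normrZ ger0_norm // /t divfK ?gt_eqF //.
move=> h1 h2; move: h2; rewrite /= => h2; lra.
Qed.

Lemma stepA l n (K : set 'cV[R]_l) (G : 'M[R]_(l, n)) g :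
  proper_cone K -> conic_set K G g !=set0 -> compact (conic_set K G g) ->
  exists2 c, 0 < c & forall y k, K k -> c * (sq y + sq k) <= sq (G *m y + k).
Proof.
move=> hK hne hco.
have rec := recession hK hne hco.
set S := [set x : 'cV[R]_n * 'cV[R]_l | sq x.1 + sq x.2 = 1 /\ K x.2].
have scale y k : K k -> 0 < sq y + sq k ->
    S ((Num.sqrt (sq y + sq k))^-1 *: y, (Num.sqrt (sq y + sq k))^-1 *: k).
  move=> hk sp; set a := (Num.sqrt (sq y + sq k))^-1.
  have a0 : 0 <= a by rewrite invr_ge0 sqrtr_ge0.
  split => /=; last exact: K_cone.
  rewrite !sqZ -mulrDr /a exprVn sqr_sqrtr ?ltW // mulVf // gt_eqF //.
have trivial y k : sq y + sq k = 0 -> forall c, c * (sq y + sq k) <= sq (G *m y + k).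
  by move=> -> c; rewrite mulr0 sq_ge0.
case: (pselect (S !=set0)) => [Sne|Se]; last first.
  exists 1 => // y k hk.
  have [sp|] := ltP 0 (sq y + sq k).
    by exfalso; apply: Se; eexists; exact: (scale y k hk sp).
  move=> hle; apply: trivial; apply/eqP; by rewrite eq_le hle addr_ge0 ?sq_ge0.
have hcont : continuous (fun x : 'cV[R]_n * 'cV[R]_l => sq (G *m x.1 + x.2)).
  move=> x; apply: (continuous_comp (f := fun x : 'cV[R]_n * 'cV[R]_l => G *m x.1 + x.2)).
    apply: cvgD; last exact: snd_cont.
    apply: (continuous_comp (f := fst)); [exact: fst_cont | exact: mulmx_continuous].
  exact: sq_continuous.
have hcS : compact S.
  apply: (@subclosed_compact _ _ ([set v : 'cV[R]_n | sq v <= 1] `*` [set v : 'cV[R]_l | sq v <= 1])).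
  - have -> : S = (fun x : 'cV[R]_n * 'cV[R]_l => sq x.1 + sq x.2) @^-1` [set 1]
                  `&` (snd @^-1` K).
      by apply/seteqP; split => x [h1 h2].
    apply: closedI.
      apply: (proj1 (continuous_closedP _)); last exact: closed_eq.
      move=> x; apply: cvgD.
        apply: (continuous_comp (f := fst)); [exact: fst_cont | exact: sq_continuous].
      apply: (continuous_comp (f := snd)); [exact: snd_cont | exact: sq_continuous].
    apply: (proj1 (continuous_closedP _)); [exact: snd_cont | exact: K_closed].
  - by apply: compact_setX; exact: sqball_compact.
  - move=> [d0 k0] [/= h1 h2]; split => /=.
      by rewrite -h1 lerDl sq_ge0.
    by rewrite -h1 lerDr sq_ge0.
have [[d k0] /set_mem [hS1 hS2] hmin] :=
  compact_EVT_min Sne hcS (continuous_subspaceT hcont).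
exists (sq (G *m d + k0)).
  rewrite lt_neqAle sq_ge0 andbT eq_sym; apply/eqP => /sq_eq0 h0.
  have kE : k0 = - (G *m d) by rewrite -(addKr (G *m d) k0) h0 addr0.
  have d0 : d = 0 by apply: rec; rewrite -kE.
  move: hS1; rewrite /= kE d0 mulmx0 oppr0.
  have -> : sq (0 : 'cV[R]_n) = 0 by rewrite sqE big1 // => i _; rewrite mxE expr0n.
  have -> : sq (0 : 'cV[R]_l) = 0 by rewrite sqE big1 // => i _; rewrite mxE expr0n.
  by move=> /eqP; rewrite addr0 eq_sym oner_eq0.
move=> y k hk.
have [sp|hle] := ltP 0 (sq y + sq k); last first.
  apply: trivial; apply/eqP; by rewrite eq_le hle addr_ge0 ?sq_ge0.
have := hmin _ (mem_set (scale y k hk sp)).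
rewrite /= -scalemxAr -scalerDr sqZ exprVn (sqr_sqrtr (ltW sp)) => h.
by rewrite -ler_pdivlMr // mulrC.
Qed.

End Recession.
Section Var.
Variable R : realType.

Lemma real_var (A B : R) : 0 <= B ->
  (forall s, 0 < s -> s <= 1 -> 0 <= 2 * s * A + s ^+ 2 * B) -> 0 <= A.
Proof.
move=> B0 h; rewrite leNgt; apply/negP => A0.
set s := - A / (B - A + 1).
have d0 : 0 < B - A + 1 by lra.
have s0 : 0 < s by rewrite divr_gt0 // oppr_gt0.
have hs : s * (B - A + 1) = - A by rewrite /s divfK // gt_eqF.
have s1 : s <= 1 by nra.
have := h s s0 s1; nra.
Qed.

Lemma var_ineq k1 k2 k3 (a1 d1 : 'cV[R]_k1) (a2 d2 : 'cV[R]_k2) (a3 d3 : 'cV[R]_k3) :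
  (forall s, 0 < s -> s <= 1 ->
     sq a1 + sq a2 + sq a3 <= sq (a1 + s *: d1) + sq (a2 + s *: d2) + sq (a3 + s *: d3)) ->
  0 <= dotv a1 d1 + dotv a2 d2 + dotv a3 d3.
Proof.
move=> h; apply: (@real_var _ (sq d1 + sq d2 + sq d3)).
  by rewrite !addr_ge0 // sq_ge0.
move=> s s0 s1; have := h s s0 s1; rewrite !sqDr => H.
have -> : 2 * s * (dotv a1 d1 + dotv a2 d2 + dotv a3 d3) + s ^+ 2 * (sq d1 + sq d2 + sq d3)
  = (sq a1 + 2 * s * dotv a1 d1 + s ^+ 2 * sq d1 + (sq a2 + 2 * s * dotv a2 d2 + s ^+ 2 * sq d2) +
     (sq a3 + 2 * s * dotv a3 d3 + s ^+ 2 * sq d3)) - (sq a1 + sq a2 + sq a3) by ring.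
by rewrite subr_ge0.
Qed.

Lemma sq0 k : sq (0 : 'cV[R]_k) = 0.
Proof. by rewrite sqE big1 // => i _; rewrite mxE expr0n. Qed.

End Var.

Ltac mxring := rewrite ?(mulmxDr, mulmxN, mulmxBr, mulmx0) -?scalemxAr;
  apply/matrixP => i j; rewrite !mxE; ring.
Section OnlyIf.
Variable R : realType.

Lemma split_bound (c a b B E : R) : 0 < c -> c * (a + b) <= B -> 0 <= a -> 0 <= b ->
  0 <= E -> a <= B / c + E /\ b <= B / c + E /\ a <= E + B / c /\ b <= E + B / c.
Proof.
move=> c0 h a0 b0 E0; set q := B / c.
have hq : q * c = B by rewrite /q divfK // gt_eqF.
have : a + b <= q by nra.
move=> H; repeat split; lra.
Qed.

Lemma only_if l n (K : set 'cV[R]_l) (G Gi : 'M[R]_(l, n)) (g gi : 'cV[R]_l)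
  (Q Qi : 'M[R]_n) (p pi : 'cV[R]_n) :
  proper_cone K ->
  conic_set K G g !=set0 -> compact (conic_set K G g) ->
  conic_set K Gi gi !=set0 -> compact (conic_set K Gi gi) ->
  Q^T *m Q = 1%:M -> Qi^T *m Qi = 1%:M ->
  0 < set_dist (placed_set K G g Q p) (placed_set K Gi gi Qi pi) ->
  exists lam nu : 'cV[R]_l,
     [/\ dual_cone K lam, dual_cone K nu,
         - dotv lam (G *m Q^T *m (p - pi) + g) - dotv nu gi > 0,
         norm2 (lam^T *m G *m Q^T) <= 1
       & lam^T *m G *m Q^T = - (nu^T *m Gi *m Qi^T)].
Proof.
move=> hK hne hco hnei hcoi hQ hQi hdist.
have [c1 c1p hc1] := stepA hK hne hco.
have [c2 c2p hc2] := stepA hK hnei hcoi.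
have [y10 hy10] := hne; have [y20 hy20] := hnei.
pose u1 := fun x : ('cV[R]_n * 'cV[R]_n) * ('cV[R]_l * 'cV[R]_l) => G *m x.1.1 + x.2.1 - g.
pose u2 := fun x : ('cV[R]_n * 'cV[R]_n) * ('cV[R]_l * 'cV[R]_l) => Gi *m x.1.2 + x.2.2 - gi.
pose tt := fun x : ('cV[R]_n * 'cV[R]_n) * ('cV[R]_l * 'cV[R]_l) =>
  Q *m x.1.1 + p - (Qi *m x.1.2 + pi).
pose f := fun x => sq (u1 x) + sq (u2 x) + sq (tt x).
pose D := fun x : ('cV[R]_n * 'cV[R]_n) * ('cV[R]_l * 'cV[R]_l) => K x.2.1 /\ K x.2.2.
pose x0 := ((y10, y20), (g - G *m y10, gi - Gi *m y20)).
have Dx0 : D x0 by split.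
pose V := f x0.
pose M := (2 * V + 2 * sq g) / c1 + (2 * V + 2 * sq gi) / c2.
pose Bl := [set v : 'cV[R]_l | sq v <= M].
pose Bn := [set v : 'cV[R]_n | sq v <= M].
pose P := (Bn `*` Bn) `*` ((Bl `&` K) `*` (Bl `&` K)).
have bound : forall x, D x -> f x <= V -> P x.
  move=> [[y1 y2] [k1 k2]] hD hfx; case: hD => /= hk1 hk2.
  have s1 : sq (u1 ((y1, y2), (k1, k2))) <= V.
    move: hfx; rewrite /f; have := sq_ge0 (u2 ((y1, y2), (k1, k2))); have := sq_ge0 (tt ((y1, y2), (k1, k2))); lra.
  have s2 : sq (u2 ((y1, y2), (k1, k2))) <= V.
    move: hfx; rewrite /f; have := sq_ge0 (u1 ((y1, y2), (k1, k2))); have := sq_ge0 (tt ((y1, y2), (k1, k2))); lra.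
  have e1 : G *m y1 + k1 = u1 ((y1, y2), (k1, k2)) + g by rewrite /u1 /= subrK.
  have e2 : Gi *m y2 + k2 = u2 ((y1, y2), (k1, k2)) + gi by rewrite /u2 /= subrK.
  have t1 : c1 * (sq y1 + sq k1) <= 2 * V + 2 * sq g.
    apply: le_trans (hc1 y1 k1 hk1) _; rewrite e1.
    apply: le_trans (sqD_le _ _) _; lra.
  have t2 : c2 * (sq y2 + sq k2) <= 2 * V + 2 * sq gi.
    apply: le_trans (hc2 y2 k2 hk2) _; rewrite e2.
    apply: le_trans (sqD_le _ _) _; lra.
  have V0 : 0 <= V by rewrite /V /f !addr_ge0 // sq_ge0.
  have E1 : 0 <= (2 * V + 2 * sq gi) / c2 by rewrite divr_ge0 ?addr_ge0 ?mulr_ge0 ?sq_ge0 // ltW.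
  have E2 : 0 <= (2 * V + 2 * sq g) / c1 by rewrite divr_ge0 ?addr_ge0 ?mulr_ge0 ?sq_ge0 // ltW.
  have [b1 [b2 _]] := split_bound c1p t1 (sq_ge0 _) (sq_ge0 _) E1.
  have [_ [_ [b3 b4]]] := split_bound c2p t2 (sq_ge0 _) (sq_ge0 _) E2.
  by split; split => //; split.
have hcP : compact P.
  have cBl : compact (Bl `&` K).
    apply: (@subclosed_compact _ _ Bl); last exact: subIsetl.
      by apply: closedI; [exact: closed_sqle | exact: K_closed].
    exact: sqball_compact.
  by apply: compact_setX; apply: compact_setX => //; exact: sqball_compact.
have hPne : P !=set0 by exists x0; apply: bound.
have c11 : continuous (fun x : ('cV[R]_n * 'cV[R]_n) * ('cV[R]_l * 'cV[R]_l) => x.1.1).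
  move=> x; apply: (continuous_comp (f := fst)); [exact: fst_cont | exact: fst_cont].
have c12 : continuous (fun x : ('cV[R]_n * 'cV[R]_n) * ('cV[R]_l * 'cV[R]_l) => x.1.2).
  move=> x; apply: (continuous_comp (f := fst)); [exact: fst_cont | exact: snd_cont].
have c21 : continuous (fun x : ('cV[R]_n * 'cV[R]_n) * ('cV[R]_l * 'cV[R]_l) => x.2.1).
  move=> x; apply: (continuous_comp (f := snd)); [exact: snd_cont | exact: fst_cont].
have c22 : continuous (fun x : ('cV[R]_n * 'cV[R]_n) * ('cV[R]_l * 'cV[R]_l) => x.2.2).
  move=> x; apply: (continuous_comp (f := snd)); [exact: snd_cont | exact: snd_cont].
have hcf : continuous f.
  move=> x; apply: cvgD; first apply: cvgD.
  - apply: (continuous_comp (f := u1)); last exact: sq_continuous.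
    apply: cvgB; last exact: cvg_cst.
    apply: cvgD; last exact: c21.
    apply: (continuous_comp (f := fun x => x.1.1)); [exact: c11 | exact: mulmx_continuous].
  - apply: (continuous_comp (f := u2)); last exact: sq_continuous.
    apply: cvgB; last exact: cvg_cst.
    apply: cvgD; last exact: c22.
    apply: (continuous_comp (f := fun x => x.1.2)); [exact: c12 | exact: mulmx_continuous].
  - apply: (continuous_comp (f := tt)); last exact: sq_continuous.
    apply: cvgB.
      apply: cvgD; last exact: cvg_cst.
      apply: (continuous_comp (f := fun x => x.1.1)); [exact: c11 | exact: mulmx_continuous].
    apply: cvgD; last exact: cvg_cst.
    apply: (continuous_comp (f := fun x => x.1.2)); [exact: c12 | exact: mulmx_continuous].
have [xs /set_mem hxsP hmin] := compact_EVT_min hPne hcP (continuous_subspaceT hcf).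
have DP : forall x, P x -> D x by move=> x [_ [[_ ?] [_ ?]]].
have hopt : forall x, D x -> f xs <= f x.
  move=> x Dx; have [hle|hgt] := leP (f x) V.
    by apply: hmin; apply: mem_set; exact: bound.
  apply: le_trans (ltW hgt); apply: hmin; apply: mem_set; exact: bound.
have VLx : forall (xf : R -> ('cV[R]_n * 'cV[R]_n) * ('cV[R]_l * 'cV[R]_l)) d1 d2 d3,
    (forall s, 0 < s -> s <= 1 -> D (xf s) /\ u1 (xf s) = u1 xs + s *: d1 /\
        u2 (xf s) = u2 xs + s *: d2 /\ tt (xf s) = tt xs + s *: d3) ->
    0 <= dotv (u1 xs) d1 + dotv (u2 xs) d2 + dotv (tt xs) d3.
  move=> xf d1 d2 d3 H; apply: var_ineq => s s0 s1.
  have [Dx [e1 [e2 e3]]] := H s s0 s1.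
  by have := hopt _ Dx; rewrite /f e1 e2 e3.
have [Dxs1 Dxs2] := DP _ hxsP.
move: xs hxsP hmin hopt VLx Dxs1 Dxs2 => [[y1 y2] [k1 k2]] hxsP hmin hopt VLx /= Dk1 Dk2.
rewrite /u1 /u2 /tt /= in VLx.
set a1 := G *m y1 + k1 - g in VLx *.
set a2 := Gi *m y2 + k2 - gi in VLx *.
set w := Q *m y1 + p - (Qi *m y2 + pi) in VLx *.
have dual1 : dual_cone K a1.
  move=> k hk.
  have := VLx (fun s => ((y1, y2), (k1 + s *: k, k2))) k 0 0.
  rewrite !dotv0r !addr0; apply => s s0 s1; split.
    by split => //=; apply: K_add => //; apply: K_cone => //; exact: ltW.
  by rewrite /a1 /a2 /w /=; split; [mxring | split; mxring].
have dual2 : dual_cone K a2.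
  move=> k hk.
  have := VLx (fun s => ((y1, y2), (k1, k2 + s *: k))) 0 k 0.
  rewrite !dotv0r add0r addr0; apply => s s0 s1; split.
    by split => //=; apply: K_add => //; apply: K_cone => //; exact: ltW.
  by rewrite /a1 /a2 /w /=; split; [mxring | split; mxring].
(* (ii) stationarity in y1 *)
have hv1 : G^T *m a1 + Q^T *m w = 0.
  set v := G^T *m a1 + Q^T *m w.
  have := VLx (fun s => ((y1 + s *: (- v), y2), (k1, k2))) (G *m (- v)) 0 (Q *m (- v)).
  have E1 : forall (s : R) d, G *m (y1 + s *: d) + k1 - g = a1 + s *: (G *m d).
    by move=> s d; rewrite /a1; mxring.
  have E2 : forall (s : R) d, Q *m (y1 + s *: d) + p - (Qi *m y2 + pi) = w + s *: (Q *m d).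
    by move=> s d; rewrite /w; mxring.
  have E3 : forall (s : R), a2 = a2 + s *: 0 by move=> s; rewrite scaler0 addr0.
  move=> /(_ _) H.
  have {H} := H (fun s s0 s1 => conj (conj Dk1 Dk2) (conj (E1 s _) (conj (E3 s) (E2 s _)))).
  rewrite dotv0r addr0 !dotv_mulmx -dotvDl -/v dotvNr => h.
  apply: sq_eq0; apply/eqP; rewrite eq_le sq_ge0 andbT; rewrite /sq; lra.
have hv2 : Gi^T *m a2 - Qi^T *m w = 0.
  set v := Gi^T *m a2 - Qi^T *m w.
  have := VLx (fun s => ((y1, y2 + s *: (- v)), (k1, k2))) 0 (Gi *m (- v)) (- (Qi *m (- v))).
  have E1 : forall (s : R) d, Gi *m (y2 + s *: d) + k2 - gi = a2 + s *: (Gi *m d).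
    by move=> s d; rewrite /a2; mxring.
  have E2 : forall (s : R) d, Q *m y1 + p - (Qi *m (y2 + s *: d) + pi) = w + s *: (- (Qi *m d)).
    by move=> s d; rewrite /w; mxring.
  have E3 : forall (s : R), a1 = a1 + s *: 0 by move=> s; rewrite scaler0 addr0.
  move=> /(_ _) H.
  have {H} := H (fun s s0 s1 => conj (conj Dk1 Dk2) (conj (E3 s) (conj (E1 s _) (E2 s _)))).
  rewrite dotv0r add0r dotvNr !dotv_mulmx -dotvBl -/v dotvNr => h.
  apply: sq_eq0; apply/eqP; rewrite eq_le sq_ge0 andbT; rewrite /sq; lra.
have hiv : 0 <= dotv a1 (- (a1 + g)) + dotv a2 (- (a2 + gi)) + dotv w ((p - pi) - w).
  apply: (VLx (fun s => (((1 - s) *: y1, (1 - s) *: y2), ((1 - s) *: k1, (1 - s) *: k2)))) => s s0 s1.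
  have s1' : 0 <= 1 - s by lra.
  split; first by split => /=; apply: K_cone.
  by rewrite /a1 /a2 /w /=; split; [mxring | split; mxring].
rewrite (dotvNr a1 (a1 + g)) (dotvDr a1 a1 g) (dotvNr a2 (a2 + gi)) (dotvDr a2 a2 gi) (dotvBr w (p - pi) w) (dotvBr w p pi) in hiv.
have fpos : 0 < sq a1 + sq a2 + sq w.
  rewrite ltNge; apply/negP => hle.
  have h1 := sq_ge0 a1; have h2 := sq_ge0 a2; have h3 := sq_ge0 w.
  have a10 : a1 = 0 by apply: sq_eq0; lra.
  have a20 : a2 = 0 by apply: sq_eq0; lra.
  have w0 : w = 0 by apply: sq_eq0; lra.
  have hz1 : placed_set K G g Q p (Q *m y1 + p).
    exists y1; split => //; rewrite /conic_set /cone_le /=.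
    have -> : g - G *m y1 = k1 - a1 by rewrite /a1; mxring.
    by rewrite a10 subr0.
  have hz2 : placed_set K Gi gi Qi pi (Qi *m y2 + pi).
    exists y2; split => //; rewrite /conic_set /cone_le /=.
    have -> : gi - Gi *m y2 = k2 - a2 by rewrite /a2; mxring.
    by rewrite a20 subr0.
  move: hdist; rewrite /set_dist.
  set E := [set r | _].
  have hlb : has_lbound E.
    by exists 0 => r [z1 [z2 [_ [_ ->]]]]; rewrite norm2_cV sqrtr_ge0.
  have hE : E (norm2 (Q *m y1 + p - (Qi *m y2 + pi))).
    by exists (Q *m y1 + p), (Qi *m y2 + pi).
  have := ge_inf hlb hE.
  rewrite -/w w0 norm2_cV sq0 sqrtr0 => h4 h5.
  by have := lt_le_trans h5 h4; rewrite ltxx.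
have QQ : Q *m Q^T = 1%:M := mulmx1C hQ.
have QQi : Qi *m Qi^T = 1%:M := mulmx1C hQi.
have eG : G^T *m a1 = - (Q^T *m w) by apply/eqP; rewrite -addr_eq0 hv1.
have eGi : Gi^T *m a2 = Qi^T *m w by apply/eqP; rewrite -subr_eq0 hv2.
set th := (1 + Num.sqrt (sq w))^-1.
have th0 : 0 < th by rewrite invr_gt0 ltr_wpDr // sqrtr_ge0.
have hM : (th *: a1)^T *m G *m Q^T = (- (th *: w))^T.
  apply: trmx_inj; rewrite !trmx_mul !trmxK -!scalemxAr eG mulmxN mulmxA QQ mul1mx.
  by rewrite scalerN.
have hN : (th *: a2)^T *m Gi *m Qi^T = (th *: w)^T.
  apply: trmx_inj; rewrite !trmx_mul !trmxK -!scalemxAr eGi mulmxA QQi mul1mx.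
  by [].
have ew : dotv a1 (G *m Q^T *m (p - pi)) = - dotv w (p - pi).
  by rewrite dotv_mulmx trmx_mul trmxK -mulmxA eG mulmxN mulmxA QQ mul1mx dotvNl.
exists (th *: a1), (th *: a2); split.
- by move=> x hx; rewrite dotvZl; apply: mulr_ge0; [exact: ltW | exact: dual1].
- by move=> x hx; rewrite dotvZl; apply: mulr_ge0; [exact: ltW | exact: dual2].
- rewrite !dotvZl dotvDr ew dotvBr; rewrite /sq in fpos.
  have : 0 < th * (dotv w p - dotv w pi - dotv a1 g - dotv a2 gi) by apply: mulr_gt0 => //; lra.
  lra.
- rewrite hM norm2_rV trmxK sqN sqZ sqrtrM ?sqr_ge0 // sqrtr_sqr (ger0_norm (ltW th0)).
  rewrite /th mulrC ler_pdivrMr ?ltr_wpDr ?sqrtr_ge0 // mul1r lerDr //.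
- by rewrite hM hN linearN.
Qed.

End OnlyIf.

Theorem proposition1 (R : realType) (l n : nat) (K : set 'cV[R]_l)
  (G Gi : 'M[R]_(l, n)) (g gi : 'cV[R]_l) (Q Qi : 'M[R]_n) (p pi : 'cV[R]_n) :
  proper_cone K ->
  conic_set K G g !=set0 -> convex_set (conic_set K G g) ->
  compact (conic_set K G g) ->
  conic_set K Gi gi !=set0 -> convex_set (conic_set K Gi gi) ->
  compact (conic_set K Gi gi) ->
  rotation Q -> rotation Qi ->
  (0 < set_dist (placed_set K G g Q p) (placed_set K Gi gi Qi pi) <->
   exists lam nu : 'cV[R]_l,
     [/\ dual_cone K lam, dual_cone K nu,
         - dotv lam (G *m Q^T *m (p - pi) + g) - dotv nu gi > 0,
         norm2 (lam^T *m G *m Q^T) <= 1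
       & lam^T *m G *m Q^T = - (nu^T *m Gi *m Qi^T)]).
Proof.
move=> hK hne _ hco hnei _ hcoi [hQ _] [hQi _]; split.
  exact: only_if.
exact: if_dir.
Qed.
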